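(* Let $\alpha_0\in\mathbb R$. Let $M,K$ be the $5\times5$ matrices $$M=\begin{pmatrix}0&\frac12&-\frac12&0&0\\-\frac12&0&0&0&0\\\frac12&0&0&0&0\\0&0&0&0&0\\0&0&0&0&0\end{pmatrix},\quad K=\begin{pmatrix}0&0&0&-1&0\\0&0&0&0&1\\0&0&0&0&0\\1&0&0&0&0\\0&-1&0&0&0\end{pmatrix},$$ let $S(\mathbf z)=-wu-\frac{u^3}{2}-\frac{u\rho^2}{2}+\rho v$ for $\mathbf z=(u,\phi,\rho,v,w)^T$, let $A$ be the $5\times5$ matrix whose only nonzero entries are $A_{12}=A_{21}=\alpha_0$, and $B=0$. Let $\mathbf z_h=(u_h,\phi_h,\rho_h,v_h,w_h)^T$ be continuously differentiable in $t$ with values in $(V_h)^5$ and satisfy, for every $j$ and every $\boldsymbol\varphi\in(V_h)^5$, $$\int_{I_j}M\partial_t\mathbf z_h\cdot\boldsymbol\varphi\,dx-\int_{I_j}K\mathbf z_h\cdot\partial_x\boldsymbol\varphi\,dx+\big(\widehat{K\mathbf z_h}\cdot\boldsymbol\varphi^-\big)_{j+\frac12}-\big(\widehat{K\mathbf z_h}\cdot\boldsymbol\varphi^+\big)_{j-\frac12}=\int_{I_j}\nabla_{\mathbf z}S(\mathbf z_h)\cdot\boldsymbol\varphi\,dx,$$ with $\widehat{K\mathbf z_h}=K\{\mathbf z_h\}+A[\mathbf z_h]$ at each interface (equivalently, fluxes $\widehat{v_h}=\{v_h\}-\alpha_0[\phi_h]$, $\widehat{w_h}=\{w_h\}+\alpha_0[u_h]$,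 $\widehat{u_h}=\{u_h\}$, $\widehat{\phi_h}=\{\phi_h\}$). Then the discrete energy $$\mathcal E_h=-\frac12\int_\Omega u_h\big(u_h^2+\rho_h^2\big)dx+\alpha_0\sum_j\big([u_h][\phi_h]\big)_{j+\frac12}$$ is constant in time.
   Context: This is a DG discretization of the Camassa–Holm equation $u_t-u_{xxt}+3uu_x-2u_xu_{xx}-uu_{xxx}=0$ in the multi-symplectic form $M\mathbf z_t+K\mathbf z_x=\nabla_{\mathbf z}S(\mathbf z)$ above. Mesh and spaces: a one-dimensional domain $\Omega$ is partitioned into cells $I_j=[x_{j-1/2},x_{j+1/2}]$, $j=1,\dots,N$, with periodic boundary conditions (interface indices modulo $N$). For fixed $k\ge0$, $V_h=\{v\in L^2(\Omega): v|_{I_j}\text{ is a polynomial of degree}\le k\ \forall j\}$. For vector functions in $(V_h)^5$, superscripts $\pm$ at $x_{j+1/2}$ denote right/left limits, $\{\mathbf v\}=\frac12(\mathbf v^++\mathbf v^-)$, $[\mathbf v]=\mathbf v^+-\mathbf v^-$; subscript $j\pm\frac12$ denotes evaluation at $x_{j\pm1/2}$. *)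

(* Defs.v *)
From HB Require Import structures.
From mathcomp Require Import all_boot all_order all_algebra.
From mathcomp Require Import all_classical all_reals all_analysis.
Set Implicit Arguments. Unset Strict Implicit. Unset Printing Implicit Defensive.
Import Order.TTheory GRing.Theory Num.Theory.
Import numFieldNormedType.Exports.
Local Open Scope classical_set_scope.
Local Open Scope ring_scope.

Definition iu   : 'I_5 := @Ordinal 5 0 isT.
Definition iphi : 'I_5 := @Ordinal 5 1 isT.
Definition irho : 'I_5 := @Ordinal 5 2 isT.
Definition iv   : 'I_5 := @Ordinal 5 3 isT.
Definition iw   : 'I_5 := @Ordinal 5 4 isT.

Section DG.
Variable R : realType.

(* Polynomials of degree <= k (local space on one cell). *)
Definition Pk (k : nat) (p : {poly R}) : Prop := (size p <= k.+1)%N.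

(* The matrices M, K, A (A_{12} = A_{21} = alpha0, 1-based in the paper). *)
Definition Mmat : 'M[R]_5 := \matrix_(i < 5, j < 5)
  match nat_of_ord i, nat_of_ord j with
  | 0, 1 => 2^-1 | 0, 2 => - 2^-1 | 1, 0 => - 2^-1 | 2, 0 => 2^-1
  | _, _ => 0 end.

Definition Kmat : 'M[R]_5 := \matrix_(i < 5, j < 5)
  match nat_of_ord i, nat_of_ord j with
  | 0, 3 => -1 | 1, 4 => 1 | 3, 0 => 1 | 4, 1 => -1
  | _, _ => 0 end.

Definition Amat (alpha0 : R) : 'M[R]_5 := \matrix_(i < 5, j < 5)
  match nat_of_ord i, nat_of_ord j with
  | 0, 1 => alpha0 | 1, 0 => alpha0
  | _, _ => 0 end.

Definition Sfun (z : 'I_5 -> R) : R :=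
  - z iw * z iu - z iu ^+ 3 / 2 - z iu * z irho ^+ 2 / 2 + z irho * z iv.

Definition gradS (z : 'I_5 -> R) (c : 'I_5) : R :=
  match nat_of_ord c with
  | 0 => - z iw - 3%:R * z iu ^+ 2 / 2 - z irho ^+ 2 / 2
  | 1 => 0
  | 2 => - (z iu * z irho) + z iv
  | 3 => z irho
  | _ => - z iu
  end.

Definition cellint (a b : R) (f : R -> R) : R :=
  Rintegral (@lebesgue_measure R) `[a, b] f.

Variable N : nat.
(* Mesh nodes: xs j = x_{j-1/2} (0-based: cell j : 'I_N is [xs j, xs j.+1]);
   periodicity: interface to the right of cell j joins cell j and cell ordS j. *)
Variable xs : nat -> R.

(* A DG function in (V_h)^5: one polynomial per cell and component. *)
Definition DGfun := 'I_N -> 'I_5 -> {poly R}.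

Definition trm (v : DGfun) (j : 'I_N) (c : 'I_5) : R := (v j c).[xs j.+1].
Definition trp (v : DGfun) (j : 'I_N) (c : 'I_5) : R :=
  (v (ordS j) c).[xs (ordS j)].
Definition avg (v : DGfun) j c : R := (trp v j c + trm v j c) / 2.
Definition jump (v : DGfun) j c : R := trp v j c - trm v j c.

Definition fluxK (alpha0 : R) (v : DGfun) (j : 'I_N) (c : 'I_5) : R :=
  \sum_(d < 5) Kmat c d * avg v j d + \sum_(d < 5) Amat alpha0 c d * jump v j d.

Definition dtz (z : R -> DGfun) (t : R) (j : 'I_N) (d : 'I_5) (x : R) : R :=
  derive1 (fun s => (z s j d).[x]) t.

Definition DG_lhs (alpha0 : R) (z : R -> DGfun) (t : R) (phi : DGfun)
    (j : 'I_N) : R :=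
  cellint (xs j) (xs j.+1)
    (fun x => \sum_(c < 5) (\sum_(d < 5) Mmat c d * dtz z t j d x) * (phi j c).[x])
  - cellint (xs j) (xs j.+1)
    (fun x => \sum_(c < 5) (\sum_(d < 5) Kmat c d * (z t j d).[x])
                             * ((phi j c)^`()).[x])
  + \sum_(c < 5) fluxK alpha0 (z t) j c * (phi j c).[xs j.+1]
  - \sum_(c < 5) fluxK alpha0 (z t) (ord_pred j) c * (phi j c).[xs j].

Definition DG_rhs (z : R -> DGfun) (t : R) (phi : DGfun) (j : 'I_N) : R :=
  cellint (xs j) (xs j.+1)
    (fun x => \sum_(c < 5) gradS (fun d => (z t j d).[x]) c * (phi j c).[x]).

(* Discrete energy; the integral over Omega is the sum of the cell integrals. *)
Definition energy (alpha0 : R) (z : R -> DGfun) (t : R) : R :=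
  - (2^-1) * \sum_(j < N) cellint (xs j) (xs j.+1)
       (fun x => (z t j iu).[x] * ((z t j iu).[x] ^+ 2 + (z t j irho).[x] ^+ 2))
  + alpha0 * \sum_(j < N) jump (z t) j iu * jump (z t) j iphi.

End DG.

(* Main.v *)
Require Import Defs.
From HB Require Import structures.
From mathcomp Require Import all_boot all_order all_algebra.
From mathcomp Require Import all_classical all_reals all_analysis.
From mathcomp Require Import ring lra.
Import Order.TTheory GRing.Theory Num.Theory.
Import numFieldNormedType.Exports.
Local Open Scope ring_scope.

Section Deriv.
Variable R : realType.
Implicit Types (f g : R -> R) (t df dg : R).

Lemma dCst t (c : R) : is_derive t 1 (fun _ : R => c) 0.
Proof. exact: is_derive_cst. Qed.

Lemma dD f g t df dg : is_derive t 1 f df -> is_derive t 1 g dg ->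
  is_derive t 1 (fun s => f s + g s) (df + dg).
Proof. move=> ? ?; exact: is_deriveD. Qed.

Lemma dN f t df : is_derive t 1 f df -> is_derive t 1 (fun s => - f s) (- df).
Proof. move=> ?; exact: is_deriveN. Qed.

Lemma dB f g t df dg : is_derive t 1 f df -> is_derive t 1 g dg ->
  is_derive t 1 (fun s => f s - g s) (df - dg).
Proof. move=> ? ?; exact: is_deriveB. Qed.

Lemma dM f g t df dg : is_derive t 1 f df -> is_derive t 1 g dg ->
  is_derive t 1 (fun s => f s * g s) (f t * dg + g t * df).
Proof. move=> ? ?; exact: is_deriveM. Qed.

Lemma dZ f t df (c : R) : is_derive t 1 f df ->
  is_derive t 1 (fun s => c * f s) (c * df).
Proof. move=> ?; exact: is_deriveZ. Qed.

Lemma dsum n (f : 'I_n -> R -> R) t (df : 'I_n -> R) :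
  (forall i, is_derive t 1 (f i) (df i)) ->
  is_derive t 1 (fun s => \sum_(i < n) f i s) (\sum_(i < n) df i).
Proof.
move=> H; have := @is_derive_sum _ _ _ n f t 1 df H.
by rewrite (_ : \sum_(i < n) f i = fun s => \sum_(i < n) f i s) //; apply/funext => s; rewrite fct_sumE.
Qed.

Lemma dE f t df df' : is_derive t 1 f df -> df = df' -> is_derive t 1 f df'.
Proof. by move=> ? <-. Qed.

Lemma dUniq f t df : is_derive t 1 f df -> (forall s, f s = 0) -> df = 0.
Proof.
move=> H H0; rewrite -(@derive_val _ _ _ _ _ _ _ H).
by rewrite (_ : f = cst 0) ?derive_cst //; apply/funext => s; rewrite H0.
Qed.

Lemma dext f g t df : (forall s, f s = g s) -> is_derive t 1 g df -> is_derive t 1 f df.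
Proof. by move=> H; rewrite (_ : f = g) //; apply/funext. Qed.

End Deriv.
Arguments dext {R f} g {t df}.
Arguments dCst {R}.
Arguments dsum {R n} f {t} df.
Arguments dM {R f g t df dg}.
Arguments dD {R f g t df dg}.
Arguments dB {R f g t df dg}.
Arguments dN {R f t df}.
Arguments dZ {R f t df}.
Arguments dUniq {R f t df}.
Arguments dE {R f t df df'}.

Lemma cellint_deriv (R : realType) (a b : R) (P : {poly R}) : a < b ->
  cellint a b (fun x => (P^`()).[x]) = P.[b] - P.[a].
Proof.
move=> ab; rewrite /cellint /Rintegral.
rewrite (@continuous_FTC2 R (fun x => (P^`()).[x]) (horner P) a b ab).
- by rewrite -EFinD.
- by apply: continuous_subspaceT => x; exact: continuous_horner.
- split.
  + by move=> x _; exact: derivable_horner.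
  + by apply: cvg_at_right_filter; exact: continuous_horner.
  + by apply: cvg_at_left_filter; exact: continuous_horner.
- by move=> x _; rewrite -derivE.
Qed.

Section Poly.
Variable R : realType.

Definition primn n (p : {poly R}) : {poly R} :=
  \sum_(i < n) (p`_i / i.+1%:R) *: 'X^(i.+1).

Lemma deriv_primn n (p : {poly R}) : (size p <= n)%N -> (primn n p)^`() = p.
Proof.
move=> sp; apply/polyP => j; rewrite coef_deriv /primn coef_sum.
under eq_bigr => i _ do rewrite coefZ coefXn eqSS.
case: (ltnP j n) => jn.
  rewrite (bigD1 (Ordinal jn)) //= eqxx mulr1 big1 ?addr0; last first.
    move=> i ij.
    by rewrite eq_sym -(inj_eq val_inj) /= in ij; rewrite (negbTE ij) mulr0.
  by rewrite -[_ *+ j.+1]mulr_natr divfK // pnatr_eq0.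
rewrite big1; last by move=> i _; rewrite (_ : (j == i) = false) ?mulr0 //; apply/negbTE; rewrite neq_ltn (leq_trans (ltn_ord i) jn) orbT.
by move/leq_sizeP: sp => -> //; rewrite mul0rn.
Qed.

Lemma I_coef (a b : R) n (p : {poly R}) : a < b -> (size p <= n)%N ->
  cellint a b (horner p) =
  \sum_(i < n) p`_i * ((b ^+ i.+1 - a ^+ i.+1) / i.+1%:R).
Proof.
move=> ab sp.
rewrite (_ : horner p = fun x => ((primn n p)^`()).[x]); last first.
  by apply/funext => x; rewrite deriv_primn.
rewrite cellint_deriv // /primn !horner_sum -sumrB; apply: eq_bigr => i _.
rewrite !hornerZ !hornerXn; field.
by rewrite addrC natr1 pnatr_eq0.
Qed.

Arguments I_coef {a b n p}.

Lemma I_add (a b : R) (p q : {poly R}) : a < b ->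
  cellint a b (horner (p + q)) = cellint a b (horner p) + cellint a b (horner q).
Proof.
move=> ab; set n := (size p + size q)%N.
have sp : (size p <= n)%N by rewrite leq_addr.
have sq : (size q <= n)%N by rewrite leq_addl.
have spq : (size (p + q)%R <= n)%N.
  by apply: leq_trans (size_polyD _ _) _; rewrite geq_max sp sq.
rewrite !(I_coef ab spq, I_coef ab sp, I_coef ab sq) -big_split /=.
by apply: eq_bigr => i _; rewrite coefD mulrDl.
Qed.

Lemma I_scale (a b : R) c (p : {poly R}) : a < b ->
  cellint a b (horner (c%:P * p)) = c * cellint a b (horner p).
Proof.
move=> ab; have sp : (size (c%:P * p)%R <= size p)%N.
  by rewrite mul_polyC size_scale_leq.
rewrite (I_coef ab sp) (I_coef ab (leqnn _)) mulr_sumr.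
by apply: eq_bigr => i _; rewrite coefCM mulrA.
Qed.

Lemma I_opp (a b : R) (p : {poly R}) : a < b ->
  cellint a b (horner (- p)) = - cellint a b (horner p).
Proof.
move=> ab; rewrite -mulN1r -polyCN I_scale // mulN1r //.
Qed.

Lemma I_sub (a b : R) (p q : {poly R}) : a < b ->
  cellint a b (horner (p - q)) = cellint a b (horner p) - cellint a b (horner q).
Proof. by move=> ab; rewrite I_add // I_opp. Qed.

Lemma I0 (a b : R) : a < b -> cellint a b (horner (0 : {poly R})) = 0.
Proof. by move=> ab; rewrite (I_coef (n:=0) ab) ?size_poly0 // big_ord0. Qed.

Implicit Types (q r : R -> {poly R}).

Definition hasD (q : R -> {poly R}) (t : R) (q' : {poly R}) :=
  forall i, is_derive t 1 (fun s => (q s)`_i) q'`_i.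

Lemma hasD_cst (p : {poly R}) t : hasD (fun _ => p) t 0.
Proof. by move=> i; rewrite coef0; exact: dCst. Qed.

Lemma hasD_add q r t (q' r' : {poly R}) : hasD q t q' -> hasD r t r' ->
  hasD (fun s => q s + r s) t (q' + r').
Proof.
move=> Hq Hr i; apply: (dext (fun s => (q s)`_i + (r s)`_i)).
  by move=> s; rewrite coefD.
by rewrite coefD; apply: dD.
Qed.

Lemma hasD_opp q t (q' : {poly R}) : hasD q t q' -> hasD (fun s => - q s) t (- q').
Proof.
move=> Hq i; apply: (dext (fun s => - (q s)`_i)).
  by move=> s; rewrite coefN.
by rewrite coefN; apply: dN.
Qed.

Lemma hasD_sub q r t (q' r' : {poly R}) : hasD q t q' -> hasD r t r' ->
  hasD (fun s => q s - r s) t (q' - r').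
Proof. by move=> Hq Hr; apply: hasD_add => //; apply: hasD_opp. Qed.

Lemma hasD_mul q r t (q' r' : {poly R}) : hasD q t q' -> hasD r t r' ->
  hasD (fun s => q s * r s) t (q' * r t + q t * r').
Proof.
move=> Hq Hr i.
apply: (dext (fun s => \sum_(j < i.+1) (q s)`_j * (r s)`_(i - j))).
  by move=> s; rewrite coefM.
apply: dE; first by apply: (dsum (fun (j : 'I_i.+1) s => (q s)`_j * (r s)`_(i - j)) _) => j; apply: dM; [exact: Hq|exact: Hr].
by rewrite /= coefD !coefM -big_split /=; apply: eq_bigr => j _; rewrite addrC; congr (_ + _); exact: mulrC.
Qed.

Lemma hasD_size q t (q' : {poly R}) n : (forall s, (size (q s) <= n)%N) -> hasD q t q' ->
  (size q' <= n)%N.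
Proof.
move=> sq Hq; apply/leq_sizeP => j nj.
apply: (dUniq (Hq j)) => s.
by move/leq_sizeP: (sq s) => ->.
Qed.

Arguments hasD_size {q t q' n}.

Lemma hasD_lin q t (q' : {poly R}) n (c : nat -> R) : hasD q t q' ->
  is_derive t 1 (fun s => \sum_(i < n) (q s)`_i * c i) (\sum_(i < n) q'`_i * c i).
Proof.
move=> Hq; apply: (dsum (fun (i : 'I_n) s => (q s)`_i * c i) (fun i => q'`_i * c i)) => i.
apply: dE; first exact: (dM (Hq i) (dCst t (c i))).
by rewrite /= mulr0 add0r mulrC.
Qed.

Lemma hasD_eval q t (q' : {poly R}) n x : (forall s, (size (q s) <= n)%N) -> hasD q t q' ->
  is_derive t 1 (fun s => (q s).[x]) q'.[x].
Proof.
move=> sq Hq; rewrite (horner_coef_wide x (hasD_size sq Hq)).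
apply: (dext (fun s => \sum_(i < n) (q s)`_i * x ^+ i)).
  by move=> s; rewrite (horner_coef_wide x (sq s)).
exact: hasD_lin.
Qed.

Lemma hasD_I (a b : R) q t (q' : {poly R}) n : a < b -> (forall s, (size (q s) <= n)%N) ->
  hasD q t q' ->
  is_derive t 1 (fun s => cellint a b (horner (q s))) (cellint a b (horner q')).
Proof.
move=> ab sq Hq; rewrite (I_coef ab (hasD_size sq Hq)).
apply: (dext (fun s => \sum_(i < n) (q s)`_i * ((b ^+ i.+1 - a ^+ i.+1) / i.+1%:R))).
  by move=> s; rewrite (I_coef ab (sq s)).
exact: (@hasD_lin q t q' n (fun i => (b ^+ i.+1 - a ^+ i.+1) / i.+1%:R) Hq).
Qed.

End Poly.


Lemma sum5 (R : zmodType) (F : 'I_5 -> R) :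
  \sum_(c < 5) F c = F iu + F iphi + F irho + F iv + F iw.
Proof. by rewrite !big_ord_recl big_ord0 addr0 !addrA; congr (_ + _ + _ + _ + _); congr F; apply: val_inj. Qed.

Section Flux.
Variables (R : realType) (N : nat) (xs : nat -> R) (alpha : R).
Lemma fluxK_u (v : DGfun R N) (j : 'I_N) : fluxK xs alpha v j iu = - avg xs v j iv + alpha * jump xs v j iphi.
Proof. by rewrite /fluxK !sum5 !mxE /=; ring. Qed.
Lemma fluxK_phi (v : DGfun R N) (j : 'I_N) : fluxK xs alpha v j iphi = avg xs v j iw + alpha * jump xs v j iu.
Proof. by rewrite /fluxK !sum5 !mxE /=; ring. Qed.
Lemma fluxK_rho (v : DGfun R N) (j : 'I_N) : fluxK xs alpha v j irho = 0.
Proof. by rewrite /fluxK !sum5 !mxE /=; ring. Qed.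
Lemma fluxK_v (v : DGfun R N) (j : 'I_N) : fluxK xs alpha v j iv = avg xs v j iu.
Proof. by rewrite /fluxK !sum5 !mxE /=; ring. Qed.
Lemma fluxK_w (v : DGfun R N) (j : 'I_N) : fluxK xs alpha v j iw = - avg xs v j iphi.
Proof. by rewrite /fluxK !sum5 !mxE /=; ring. Qed.
End Flux.


Arguments hasD {R}.
Arguments hasD_eval {R q t q' n} x.
Arguments hasD_I {R a b q t q' n}.
Arguments I_sub {R a b}.
Arguments I_add {R a b}.
Arguments I_scale {R a b}.
Arguments I_opp {R a b}.

Section Main.
Variables (R : realType) (N k : nat) (xs : nat -> R) (alpha : R)
  (z : R -> 'I_N -> 'I_5 -> {poly R}).
Hypothesis Hxs : forall i : nat, (i < N)%N -> xs i < xs i.+1.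
Hypothesis Hk : forall t j c, Pk k (z t j c).
Hypothesis Hder : forall (j : 'I_N) (c : 'I_5) (i : nat),
      (forall t : R, derivable (fun s => (z s j c)`_i) t 1) /\
      continuous (fun t => derive1 (fun s => (z s j c)`_i) t).
Hypothesis HDG : forall (t : R) (phi : 'I_N -> 'I_5 -> {poly R}),
      (forall j c, Pk k (phi j c)) ->
      forall j : 'I_N, DG_lhs xs alpha z t phi j = DG_rhs xs z t phi j.

Implicit Types (t s x : R) (j : 'I_N) (c d : 'I_5).

Definition zd t j c : {poly R} := \poly_(i < k.+1) derive1 (fun s => (z s j c)`_i) t.

Local Notation I j p := (cellint (xs j) (xs j.+1) (horner p)).

Lemma ab (j : 'I_N) : xs j < xs j.+1.
Proof. exact: Hxs (ltn_ord j). Qed.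

Lemma szz s j c : (size (z s j c) <= k.+1)%N.
Proof. exact: Hk. Qed.

Lemma szzd t j c : (size (zd t j c) <= k.+1)%N.
Proof. exact: size_poly. Qed.

Lemma hasD_z t j c : hasD (fun s => z s j c) t (zd t j c).
Proof.
move=> i; rewrite coef_poly; case: ltnP => ik /=.
  rewrite derive1E; apply: derivableP; exact: (Hder j c i).1.
apply: (dext (fun _ => 0)) => s.
by have /leq_sizeP -> := szz s j c.
Qed.

Lemma d_eval j c t x : is_derive t 1 (fun s => (z s j c).[x]) (zd t j c).[x].
Proof. exact: (hasD_eval x (fun s => szz s j c) (hasD_z t j c)). Qed.

Lemma dtz_eq t j d x : dtz z t j d x = (zd t j d).[x].
Proof. by rewrite /dtz derive1E (@derive_val _ _ _ _ _ _ _ (d_eval j d t x)). Qed.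

Lemma d_avg j c t : is_derive t 1 (fun s => avg xs (z s) j c) (avg xs (zd t) j c).
Proof.
rewrite /avg /trp /trm; apply: dE.
  exact: (dM (dD (d_eval _ _ _ _) (d_eval _ _ _ _)) (dCst _ _)).
by rewrite /=; ring.
Qed.

Lemma d_jump j c t : is_derive t 1 (fun s => jump xs (z s) j c) (jump xs (zd t) j c).
Proof. by rewrite /jump /trp /trm; apply: dB; apply: d_eval. Qed.

Definition Mp t (j : 'I_N) (psi : 'I_5 -> {poly R}) : {poly R} :=
  2^-1%:P * ((zd t j iphi - zd t j irho) * psi iu - zd t j iu * psi iphi
             + zd t j iu * psi irho).
Definition Kp t (j : 'I_N) (psi : 'I_5 -> {poly R}) : {poly R} :=
  - (z t j iv * (psi iu)^`()) + z t j iw * (psi iphi)^`()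
  + z t j iu * (psi iv)^`() - z t j iphi * (psi iw)^`().
Definition Gp t (j : 'I_N) (psi : 'I_5 -> {poly R}) : {poly R} :=
  (- z t j iw - 3%:R%:P * 2^-1%:P * z t j iu ^+ 2 - 2^-1%:P * z t j irho ^+ 2) * psi iu
  + (- (z t j iu * z t j irho) + z t j iv) * psi irho
  + z t j irho * psi iv - z t j iu * psi iw.

Lemma DGc t phi (j : 'I_N) :
  DG_lhs xs alpha z t phi j - DG_rhs xs z t phi j =
  I j (Mp t j (phi j) - Kp t j (phi j) - Gp t j (phi j))
  + \sum_(c < 5) fluxK xs alpha (z t) j c * (phi j c).[xs j.+1]
  - \sum_(c < 5) fluxK xs alpha (z t) (ord_pred j) c * (phi j c).[xs j].
Proof.
rewrite /DG_lhs /DG_rhs.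
have -> : (fun x => \sum_(c < 5) (\sum_(d < 5) Mmat R c d * dtz z t j d x) * (phi j c).[x])
          = horner (Mp t j (phi j)).
  apply/funext => x; rewrite !sum5 !mxE /= !dtz_eq /Mp !hornerE; ring.
have -> : (fun x => \sum_(c < 5) (\sum_(d < 5) Kmat R c d * (z t j d).[x]) * ((phi j c)^`()).[x])
          = horner (Kp t j (phi j)).
  apply/funext => x; rewrite !sum5 !mxE /= /Kp !hornerE; ring.
have -> : (fun x => \sum_(c < 5) gradS (fun d => (z t j d).[x]) c * (phi j c).[x])
          = horner (Gp t j (phi j)).
  apply/funext => x; rewrite !sum5 /gradS /= /Gp !(hornerD, hornerN, hornerM, hornerC, horner_exp); ring.
rewrite !I_sub; try exact: ab.
ring.
Qed.


Ltac hs := rewrite ?(hornerD, hornerN, hornerM, hornerC, horner_exp, horner0).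

Lemma size_deriv_le (p : {poly R}) : (size p^`() <= size p)%N.
Proof.
have [->|p0] := eqVneq p 0; first by rewrite deriv0.
exact: ltnW (lt_size_deriv p0).
Qed.

Lemma szM (p q : {poly R}) a b : (size p <= a)%N -> (size q <= b)%N ->
  (size (p * q)%R <= a + b)%N.
Proof.
move=> pa qb; apply: leq_trans (size_polyMleq p q) _.
apply: leq_trans (leq_pred _) _; exact: leq_add.
Qed.

Lemma szD (p q : {poly R}) n : (size p <= n)%N -> (size q <= n)%N ->
  (size (p + q)%R <= n)%N.
Proof. by move=> pn qn; apply: leq_trans (size_polyD p q) _; rewrite geq_max pn qn. Qed.

Lemma szN (p : {poly R}) n : (size p <= n)%N -> (size (- p)%R <= n)%N.
Proof. by rewrite size_polyN. Qed.

Lemma szB (p q : {poly R}) n : (size p <= n)%N -> (size q <= n)%N ->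
  (size (p - q)%R <= n)%N.
Proof. by move=> pn qn; apply: szD => //; apply: szN. Qed.

Lemma hasD_eq q t (q1 q2 : {poly R}) : hasD q t q1 -> q1 = q2 -> hasD q t q2.
Proof. by move=> ? <-. Qed.

Definition phi1 t : 'I_N -> 'I_5 -> {poly R} := fun j' c =>
  match nat_of_ord c with
  | 0 => zd t j' iu | 1 => zd t j' iphi | 2 => zd t j' irho | _ => 0 end.

Lemma Pk_phi1 t j c : Pk k (phi1 t j c).
Proof.
rewrite /Pk /phi1; case: c => [[|[|[|m]]] ?] /=; rewrite ?szzd //.
by rewrite size_poly0.
Qed.

Definition bSg t (pj j : 'I_N) x :=
  fluxK xs alpha (z t) pj iu * (zd t j iu).[x]
  + fluxK xs alpha (z t) pj iphi * (zd t j iphi).[x]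
  + fluxK xs alpha (z t) pj irho * (zd t j irho).[x].

Definition X1 t j := Mp t j (phi1 t j) - Kp t j (phi1 t j) - Gp t j (phi1 t j).

Lemma S1 t j : I j (X1 t j) + bSg t j j (xs j.+1) - bSg t (ord_pred j) j (xs j) = 0.
Proof.
have /eqP := @HDG t (phi1 t) (Pk_phi1 t) j; rewrite -subr_eq0 DGc => /eqP <-.
rewrite !sum5 /bSg /=; hs; rewrite !mulr0 !addr0 //.
Qed.


Definition phiC t0 : 'I_N -> 'I_5 -> {poly R} := fun j' c =>
  match nat_of_ord c with
  | 3 => z t0 j' iv | 4 => z t0 j' iw | _ => 0 end.

Lemma Pk_phiC t j c : Pk k (phiC t j c).
Proof.
rewrite /Pk /phiC; case: c => [[|[|[|[|[|m]]]]] ?] /=; rewrite ?szz //;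
  by rewrite size_poly0.
Qed.

Definition Xc t0 s j : {poly R} :=
  - (z s j iu * (z t0 j iv)^`() - z s j iphi * (z t0 j iw)^`())
  - (z s j irho * z t0 j iv - z s j iu * z t0 j iw).

Definition bcs t0 s (pj j : 'I_N) x :=
  avg xs (z s) pj iu * (z t0 j iv).[x] - avg xs (z s) pj iphi * (z t0 j iw).[x].

Lemma Cs t0 s j : I j (Xc t0 s j) + bcs t0 s j j (xs j.+1) - bcs t0 s (ord_pred j) j (xs j) = 0.
Proof.
have /eqP := @HDG s (phiC t0) (Pk_phiC t0) j; rewrite -subr_eq0 DGc => /eqP <-.
have -> : horner (Mp s j (phiC t0 j) - Kp s j (phiC t0 j) - Gp s j (phiC t0 j))
        = horner (Xc t0 s j).
  by apply/funext => x; rewrite /Mp /Kp /Gp /Xc /= !deriv0; hs; ring.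
rewrite !sum5 /bcs /= !fluxK_v !fluxK_w; hs; ring.
Qed.

Definition Xcd t j : {poly R} :=
  - (zd t j iu * (z t j iv)^`() - zd t j iphi * (z t j iw)^`())
  - (zd t j irho * z t j iv - zd t j iu * z t j iw).

Definition bcg t (pj j : 'I_N) x :=
  avg xs (zd t) pj iu * (z t j iv).[x] - avg xs (zd t) pj iphi * (z t j iw).[x].

Lemma Cd t j : I j (Xcd t j) + bcg t j j (xs j.+1) - bcg t (ord_pred j) j (xs j) = 0.
Proof.
apply: (dUniq (f := fun s => I j (Xc t s j) + bcs t s j j (xs j.+1)
                          - bcs t s (ord_pred j) j (xs j))); last by move=> s; exact: Cs.
have HX : hasD (fun s => Xc t s j) t (Xcd t j).
  rewrite /Xc; apply: hasD_eq.
    apply: hasD_sub.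
    - apply: hasD_opp; apply: hasD_sub; apply: hasD_mul; (exact: hasD_z || exact: hasD_cst).
    - apply: hasD_sub; apply: hasD_mul; (exact: hasD_z || exact: hasD_cst).
  by rewrite /Xcd; ring.
have sX : forall s, (size (Xc t s j) <= k.+1 + k.+1)%N.
  move=> s; rewrite /Xc; apply: szB; [apply: szN|]; apply: szB; apply: szM;
    rewrite ?szz //; apply: leq_trans (size_deriv_le _) _; exact: szz.
apply: dE.
  apply: dB; first apply: dD.
  - exact: (hasD_I (ab j) sX HX).
  - rewrite /bcs; apply: dB; apply: dM; (exact: d_avg || exact: dCst).
  - rewrite /bcs; apply: dB; apply: dM; (exact: d_avg || exact: dCst).
by rewrite /bcg; ring.
Qed.


Definition Qp s j : {poly R} :=
  z s j iu * (z s j iu * z s j iu + z s j irho * z s j irho).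
Definition Qd t j : {poly R} :=
  zd t j iu * (z t j iu * z t j iu + z t j irho * z t j irho)
  + z t j iu * ((zd t j iu * z t j iu + z t j iu * zd t j iu)
                + (zd t j irho * z t j irho + z t j irho * zd t j irho)).

Lemma energyE s : energy xs alpha z s =
  - (2^-1) * \sum_(j < N) I j (Qp s j)
  + alpha * \sum_(j < N) jump xs (z s) j iu * jump xs (z s) j iphi.
Proof.
rewrite /energy; congr (_ * _ + _); apply: eq_bigr => j _.
by congr cellint; apply/funext => x; rewrite /Qp; hs; ring.
Qed.

Definition dEn t := - (2^-1) * \sum_(j < N) I j (Qd t j)
  + alpha * \sum_(j < N) (jump xs (z t) j iu * jump xs (zd t) j iphi
                          + jump xs (z t) j iphi * jump xs (zd t) j iu).

Lemma d_energy t : is_derive t 1 (energy xs alpha z) (dEn t).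
Proof.
apply: (dext (fun s => - (2^-1) * \sum_(j < N) I j (Qp s j)
  + alpha * \sum_(j < N) jump xs (z s) j iu * jump xs (z s) j iphi)).
  exact: energyE.
apply: dD; apply: dZ.
  apply: (dsum (fun j s => I j (Qp s j)) (fun j => I j (Qd t j))) => j.
  have sQ : forall s, (size (Qp s j) <= k.+1 + (k.+1 + k.+1))%N.
    by move=> s; rewrite /Qp; apply: szM; rewrite ?szz //; apply: szD; apply: szM; rewrite ?szz.
  apply: (hasD_I (ab j) sQ).
  rewrite /Qp /Qd; apply: hasD_eq.
    apply: hasD_mul; first exact: hasD_z.
    apply: hasD_add; apply: hasD_mul; exact: hasD_z.
  by [].
apply: (dsum (fun j s => jump xs (z s) j iu * jump xs (z s) j iphi)
   (fun j => jump xs (z t) j iu * jump xs (zd t) j iphi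
                          + jump xs (z t) j iphi * jump xs (zd t) j iu)) => j.
exact: (dM (d_jump j iu t) (d_jump j iphi t)).
Qed.

Definition Dp t j : {poly R} := z t j iv * zd t j iu - z t j iw * zd t j iphi.

Lemma cellint_derivH (a b : R) (P : {poly R}) : a < b ->
  cellint a b (horner (P^`())) = P.[b] - P.[a].
Proof. exact: cellint_deriv. Qed.

Lemma Qid t j : I j (Qd t j) =
  2 * (I j (X1 t j) - I j (Xcd t j)) - 2 * ((Dp t j).[xs j.+1] - (Dp t j).[xs j]).
Proof.
have abj := ab j.
rewrite -(cellint_derivH _ _ _ abj) -(I_sub _ _ abj) -!(I_scale _ _ abj) -(I_sub _ _ abj).
congr cellint; apply/funext => x.
rewrite /Qd /X1 /Mp /Kp /Gp /Xcd /Dp /phi1 /= !deriv0 !(derivD, derivN, derivM); hs.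
by field.
Qed.


Definition Ag t j := bSg t j j (xs j.+1) - bcg t j j (xs j.+1) + (Dp t j).[xs j.+1].
Definition Bg t (pj j : 'I_N) := bSg t pj j (xs j) - bcg t pj j (xs j) + (Dp t j).[xs j].

Lemma cell_piece t j : - (2^-1) * I j (Qd t j) = Ag t j - Bg t (ord_pred j) j.
Proof.
have HS := S1 t j; have HC := Cd t j.
have e1 : I j (X1 t j) = bSg t (ord_pred j) j (xs j) - bSg t j j (xs j.+1).
  by rewrite -[LHS]subr0 -HS; ring.
have e2 : I j (Xcd t j) = bcg t (ord_pred j) j (xs j) - bcg t j j (xs j.+1).
  by rewrite -[LHS]subr0 -HC; ring.
rewrite Qid e1 e2 /Ag /Bg; by field.
Qed.

Lemma dEn0 t : dEn t = 0.
Proof.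
rewrite /dEn mulr_sumr.
under eq_bigr => j _ do rewrite cell_piece.
rewrite sumrB.
have -> : \sum_(j < N) Bg t (ord_pred j) j = \sum_(i < N) Bg t i (ordS i).
  rewrite [RHS](reindex_inj (can_inj (@ord_predK N))) /=.
  by apply: eq_bigr => j _; rewrite ord_predK.
rewrite -sumrB mulr_sumr -big_split /= big1 // => i _.
rewrite /Ag /Bg /bSg /bcg /Dp !fluxK_u !fluxK_phi !fluxK_rho; hs.
rewrite /avg /jump /trm /trp; by field.
Qed.

End Main.

Theorem proposition4p4 (R : realType) (N k : nat) (xs : nat -> R)
    (alpha0 : R) (z : R -> 'I_N -> 'I_5 -> {poly R}) :
  (0 < N)%N ->
  (forall i : nat, (i < N)%N -> xs i < xs i.+1) ->
  (forall t j c, Pk k (z t j c)) ->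
  (forall (j : 'I_N) (c : 'I_5) (i : nat),
      (forall t : R, derivable (fun s => (z s j c)`_i) t 1) /\
      continuous (fun t => derive1 (fun s => (z s j c)`_i) t)) ->
  (forall (t : R) (phi : 'I_N -> 'I_5 -> {poly R}),
      (forall j c, Pk k (phi j c)) ->
      forall j : 'I_N,
        DG_lhs xs alpha0 z t phi j = DG_rhs xs z t phi j) ->
  forall t1 t2 : R, energy xs alpha0 z t1 = energy xs alpha0 z t2.
Proof.
move=> _ Hxs Hk Hder HDG t1 t2.
apply: is_derive_0_is_cst => x.
apply: dE; first by apply: d_energy.
by apply: dEn0.
Qed.
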